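(* Let $\mathcal{C}$ and $\mathcal{D}$ be $*$-categories. If $\mathcal{D}$ is a pre-Hilbert $*$-category, then $[\mathcal{C},\mathcal{D}]_*$ is also a pre-Hilbert $*$-category.
   Context: A $*$-category is a category with a choice of $f^*\colon Y\to X$ for each $f\colon X\to Y$ such that $1^*=1$, $(gf)^*=f^*g^*$, $(f^* )^*=f$; $f$ is an isometry if $f^*f=1$. A $*$-functor is a functor $F$ between $*$-categories with $F(f^* )=(Ff)^*$. $[\mathcal{C},\mathcal{D}]_*$ is the full subcategory of the functor category $[\mathcal{C},\mathcal{D}]$ on the $*$-functors, made into a $*$-category by the componentwise involution $(\sigma^* )_X=(\sigma_X)^*$ for natural transformations $\sigma$. A pre-Hilbert $*$-category is a $*$-category in which (R1) there is a zero object, (R2) every pair of objects has an orthonormal biproduct (a biproduct $(X,s_1,r_1,s_2,r_2)$ with $r_k=s_k^*$), (R3) every morphism has an isometric kernel (an equaliser with the zero morphism that is an isometry), and (R4) every diagonal $\Delta\colon X\to X\oplus X$ is a normal monomorphism (a kernel of some morphism). *)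

(* Defs.v *)
From Stdlib Require Import ProofIrrelevance FunctionalExtensionality.
Set Implicit Arguments.
Unset Strict Implicit.

Record Cat := {
  ob :> Type;
  hom : ob -> ob -> Type;
  idm : forall X, hom X X;
  comp : forall X Y Z, hom Y Z -> hom X Y -> hom X Z;
  comp_id_l : forall X Y (f : hom X Y), comp (idm Y) f = f;
  comp_id_r : forall X Y (f : hom X Y), comp f (idm X) = f;
  comp_assoc : forall X Y Z W (f : hom X Y) (g : hom Y Z) (h : hom Z W),
      comp h (comp g f) = comp (comp h g) f }.
Arguments hom {c}.
Arguments idm {c}.
Arguments comp {c X Y Z}.

Record StarCat := {
  scat :> Cat;
  star : forall (X Y : scat), hom X Y -> hom Y X;
  star_idm : forall X, star (idm X) = idm X;
  star_comp : forall X Y Z (f : hom X Y) (g : hom Y Z),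
      star (comp g f) = comp (star f) (star g);
  star_invol : forall X Y (f : hom X Y), star (star f) = f }.
Arguments star {s X Y}.

Record Functor (C D : Cat) := {
  fob :> C -> D;
  fmap : forall X Y, hom X Y -> hom (fob X) (fob Y);
  fmap_id : forall X, fmap (idm X) = idm (fob X);
  fmap_comp : forall X Y Z (f : hom X Y) (g : hom Y Z),
      fmap (comp g f) = comp (fmap g) (fmap f) }.
Arguments fmap {C D} _ {X Y}.

Definition is_star_functor (C D : StarCat) (F : Functor C D) : Prop :=
  forall X Y (f : hom X Y), fmap F (star f) = star (fmap F f).

Record NatTrans (C D : Cat) (F G : Functor C D) := {
  component :> forall X, hom (F X) (G X);
  naturality : forall X Y (f : hom X Y),
      comp (fmap G f) (component X) = comp (component Y) (fmap F f) }.

Lemma nt_eq (C D : Cat) (F G : Functor C D) (s t : NatTrans F G) :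
  (forall X, s X = t X) -> s = t.
Proof.
  destruct s as [s hs], t as [t ht]; simpl; intro H.
  assert (s = t) by (apply functional_extensionality_dep; exact H).
  subst t. f_equal. apply proof_irrelevance.
Qed.

Section FunCat.
Variables C D : StarCat.

Definition SFun := { F : Functor C D | is_star_functor F }.

Definition nt_id (F : Functor C D) : NatTrans F F.
Proof.
  refine {| component := fun X => idm (F X) |}.
  intros; rewrite comp_id_l, comp_id_r; reflexivity.
Defined.

Definition nt_comp (F G H : Functor C D) (t : NatTrans G H) (s : NatTrans F G)
  : NatTrans F H.
Proof.
  refine {| component := fun X => comp (t X) (s X) |}.
  intros X Y f.
  rewrite comp_assoc, (naturality t), <- comp_assoc, (naturality s), comp_assoc.
  reflexivity.
Defined.

Definition nt_star (F G : SFun) (s : NatTrans (proj1_sig F) (proj1_sig G))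
  : NatTrans (proj1_sig G) (proj1_sig F).
Proof.
  refine {| component := fun X => star (s X) |}.
  intros X Y f.
  pose proof (naturality s (star f)) as E.
  apply (f_equal (@star D _ _)) in E.
  rewrite !star_comp in E.
  rewrite (proj2_sig G), (proj2_sig F), !star_invol in E.
  symmetry; exact E.
Defined.

Definition FunCat_cat : Cat.
Proof.
  refine {| ob := SFun;
            hom := fun F G => NatTrans (proj1_sig F) (proj1_sig G);
            idm := fun F => nt_id (proj1_sig F);
            comp := fun F G H t s => nt_comp t s |}.
  - intros; apply nt_eq; intro; simpl; apply comp_id_l.
  - intros; apply nt_eq; intro; simpl; apply comp_id_r.
  - intros; apply nt_eq; intro; simpl; apply comp_assoc.
Defined.

Definition FunStarCat : StarCat.
Proof.
  refine {| scat := FunCat_cat; star := fun F G s => @nt_star F G s |}.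
  - intros; apply nt_eq; intro; simpl; apply star_idm.
  - intros; apply nt_eq; intro; simpl; apply star_comp.
  - intros; apply nt_eq; intro; simpl; apply star_invol.
Defined.

End FunCat.

Section PreHilbert.
Variable C : StarCat.

Definition is_zero_object (Z : C) : Prop :=
  (forall X : C, exists! f : hom X Z, True) /\
  (forall X : C, exists! f : hom Z X, True).

Definition is_zero_mor (X Y : C) (f : hom X Y) : Prop :=
  exists (Z : C) (g : hom X Z) (h : hom Z Y), is_zero_object Z /\ f = comp h g.

Definition is_isometry (X Y : C) (f : hom X Y) : Prop := comp (star f) f = idm X.

Definition is_product (X1 X2 P : C) (p1 : hom P X1) (p2 : hom P X2) : Prop :=
  forall (W : C) (f1 : hom W X1) (f2 : hom W X2),
    exists! u : hom W P, comp p1 u = f1 /\ comp p2 u = f2.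

Definition is_coproduct (X1 X2 P : C) (i1 : hom X1 P) (i2 : hom X2 P) : Prop :=
  forall (W : C) (f1 : hom X1 W) (f2 : hom X2 W),
    exists! u : hom P W, comp u i1 = f1 /\ comp u i2 = f2.

Definition is_biproduct (X1 X2 X : C) (s1 : hom X1 X) (r1 : hom X X1)
    (s2 : hom X2 X) (r2 : hom X X2) : Prop :=
  is_product r1 r2 /\ is_coproduct s1 s2 /\
  comp r1 s1 = idm X1 /\ comp r2 s2 = idm X2 /\
  is_zero_mor (comp r2 s1) /\ is_zero_mor (comp r1 s2).

Definition is_orthonormal_biproduct (X1 X2 X : C) (s1 : hom X1 X) (r1 : hom X X1)
    (s2 : hom X2 X) (r2 : hom X X2) : Prop :=
  is_biproduct s1 r1 s2 r2 /\ r1 = star s1 /\ r2 = star s2.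

Definition is_kernel (X Y K : C) (f : hom X Y) (k : hom K X) : Prop :=
  is_zero_mor (comp f k) /\
  forall (W : C) (g : hom W X), is_zero_mor (comp f g) ->
    exists! u : hom W K, comp k u = g.

Definition is_normal_mono (K X : C) (k : hom K X) : Prop :=
  exists (Y : C) (f : hom X Y), is_kernel f k.

Definition is_pre_hilbert : Prop :=
  (exists Z : C, is_zero_object Z) /\
  (forall X1 X2 : C, exists (X : C) (s1 : hom X1 X) (r1 : hom X X1)
                            (s2 : hom X2 X) (r2 : hom X X2),
      is_orthonormal_biproduct s1 r1 s2 r2) /\
  (forall (X Y : C) (f : hom X Y),
      exists (K : C) (k : hom K X), is_kernel f k /\ is_isometry k) /\
  (forall (X XX : C) (s1 : hom X XX) (r1 : hom XX X) (s2 : hom X XX) (r2 : hom XX X),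
      is_orthonormal_biproduct s1 r1 s2 r2 ->
      forall d : hom X XX, comp r1 d = idm X -> comp r2 d = idm X ->
      is_normal_mono d).

End PreHilbert.

(* Main.v *)
Require Import Defs.
From Stdlib Require Import ProofIrrelevance FunctionalExtensionality ClassicalEpsilon.
Set Implicit Arguments.
Unset Strict Implicit.

Definition choose {A : Type} {P : A -> Prop} (H : exists x, P x) : A :=
  proj1_sig (constructive_indefinite_description P H).
Lemma choose_spec {A : Type} {P : A -> Prop} (H : exists x, P x) : P (choose H).
Proof. exact (proj2_sig (constructive_indefinite_description P H)). Qed.

Lemma uex {A : Type} {P : A -> Prop} : (exists! x, P x) -> exists x, P x.
Proof. intros [x [H _]]; eauto. Qed.

Lemma zero_to_unique (S : StarCat) (Z X : S) : is_zero_object Z ->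
  forall f g : hom X Z, f = g.
Proof. intros [H _] f g. destruct (H X) as [x [_ Hx]].
  rewrite <- (Hx f I), <- (Hx g I); reflexivity. Qed.

Lemma zero_from_unique (S : StarCat) (Z X : S) : is_zero_object Z ->
  forall f g : hom Z X, f = g.
Proof. intros [_ H] f g. destruct (H X) as [x [_ Hx]].
  rewrite <- (Hx f I), <- (Hx g I); reflexivity. Qed.

Lemma zero_unique (S : StarCat) (X Y : S) (f g : hom X Y) :
  is_zero_mor f -> is_zero_mor g -> f = g.
Proof.
  intros [Z [a [b [HZ ->]]]] [Z' [a' [b' [HZ' ->]]]].
  destruct (proj1 HZ' Z) as [phi _].
  rewrite (zero_to_unique HZ' a' (comp phi a)).
  rewrite comp_assoc. f_equal. apply (zero_from_unique HZ).
Qed.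

Lemma zero_comp_l (S : StarCat) (X Y W : S) (f : hom X Y) (h : hom Y W) :
  is_zero_mor f -> is_zero_mor (comp h f).
Proof. intros [Z [a [b [HZ ->]]]]. exists Z, a, (comp h b). split; auto. apply comp_assoc. Qed.

Lemma zero_comp_r (S : StarCat) (X Y W : S) (f : hom X Y) (h : hom W X) :
  is_zero_mor f -> is_zero_mor (comp f h).
Proof. intros [Z [a [b [HZ ->]]]]. exists Z, (comp a h), b. split; auto.
  symmetry; apply comp_assoc. Qed.

Lemma zero_star (S : StarCat) (X Y : S) (f : hom X Y) :
  is_zero_mor f -> is_zero_mor (star f).
Proof. intros [Z [a [b [HZ ->]]]]. exists Z, (star b), (star a). split; auto.
  apply star_comp. Qed.

Lemma zero_through (S : StarCat) (Z X Y : S) (a : hom X Z) (b : hom Z Y) :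
  is_zero_object Z -> is_zero_mor (comp b a).
Proof. intros HZ. exists Z, a, b. auto. Qed.

Lemma prod_uniq (S : StarCat) (X1 X2 P W : S) (p1 : hom P X1) (p2 : hom P X2)
  (u v : hom W P) : is_product p1 p2 -> comp p1 u = comp p1 v -> comp p2 u = comp p2 v -> u = v.
Proof.
  intros H E1 E2. destruct (H W (comp p1 u) (comp p2 u)) as [x [_ Hx]].
  rewrite <- (Hx u), <- (Hx v); auto.
Qed.

Lemma prod_coprod (S : StarCat) (X1 X2 P : S) (r1 : hom P X1) (r2 : hom P X2) :
  is_product r1 r2 -> is_coproduct (star r1) (star r2).
Proof.
  intros H W f1 f2. destruct (H W (star f1) (star f2)) as [u [[H1 H2] Hu]].
  exists (star u). split.
  - split; rewrite <- star_comp; [rewrite H1 | rewrite H2]; apply star_invol.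
  - intros v [E1 E2]. rewrite <- (star_invol v). f_equal. apply Hu. split.
    + rewrite <- E1, star_comp, star_invol; reflexivity.
    + rewrite <- E2, star_comp, star_invol; reflexivity.
Qed.

Lemma prod_transfer (S : StarCat) (X1 X2 P Q : S) (p1 : hom P X1) (p2 : hom P X2)
  (q1 : hom Q X1) (q2 : hom Q X2) (phi : hom Q P) (psi : hom P Q) :
  is_product p1 p2 -> comp p1 phi = q1 -> comp p2 phi = q2 ->
  comp q1 psi = p1 -> comp q2 psi = p2 -> comp psi phi = idm Q -> is_product q1 q2.
Proof.
  intros H E1 E2 F1 F2 I W f1 f2.
  destruct (H W f1 f2) as [u [[U1 U2] Hu]].
  exists (comp psi u). split.
  - split; rewrite comp_assoc; [rewrite F1 | rewrite F2]; assumption.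
  - intros v [V1 V2].
    assert (Hv : comp phi v = u).
    { symmetry; apply Hu; split; rewrite comp_assoc; [rewrite E1 | rewrite E2]; assumption. }
    rewrite <- Hv, comp_assoc, I, comp_id_l; reflexivity.
Qed.

Lemma retract (S : StarCat) (K X W : S) (k : hom K X) (g : hom W X) :
  is_isometry k -> (exists w, comp k w = g) -> comp k (comp (star k) g) = g.
Proof.
  intros I [w <-]. rewrite (comp_assoc w k (star k)). unfold is_isometry in I.
  rewrite I, comp_id_l; reflexivity.
Qed.

Lemma nm_factor (S : StarCat) (A B Kk : S) (m : hom A B) (k : hom Kk B) :
  is_normal_mono m -> is_kernel (star m) k ->
  forall W (h : hom W B), is_zero_mor (comp (star k) h) -> exists u, comp m u = h.
Proof.
  intros [Y [f [Hfm Hm]]] [Hk0 Hk] W h Hh.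
  assert (Z1 : is_zero_mor (comp (star m) (star f)))
    by (rewrite <- star_comp; apply zero_star; exact Hfm).
  destruct (Hk _ _ Z1) as [v [Hv _]].
  assert (Ef : f = comp (star v) (star k))
    by (rewrite <- star_comp, Hv, star_invol; reflexivity).
  destruct (Hm W h) as [u [Hu _]].
  - rewrite Ef, <- comp_assoc. apply zero_comp_l. exact Hh.
  - exists u; exact Hu.
Qed.
Definition constF (C D : StarCat) (z : D) : Functor C D.
Proof.
  refine {| fob := fun _ => z; fmap := fun _ _ _ => idm z |}.
  - reflexivity.
  - intros; symmetry; apply comp_id_l.
Defined.

Lemma constF_star (C D : StarCat) (z : D) : is_star_functor (constF C z).
Proof. intros X Y f; simpl; symmetry; apply star_idm. Qed.

Definition Z0 (C D : StarCat) (z : D) : FunStarCat C D :=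
  exist _ (constF C z) (@constF_star C D z).

Definition to_z (C D : StarCat) (z : D) (Hz : is_zero_object z) (F : FunStarCat C D)
  : hom F (Z0 C z).
Proof.
  refine (@Build_NatTrans _ _ (proj1_sig F) (constF C z) (fun X => choose (uex (proj1 Hz (proj1_sig F X)))) _).
  intros; apply (zero_to_unique Hz).
Defined.

Definition from_z (C D : StarCat) (z : D) (Hz : is_zero_object z) (F : FunStarCat C D)
  : hom (Z0 C z) F.
Proof.
  refine (@Build_NatTrans _ _ (constF C z) (proj1_sig F) (fun X => choose (uex (proj2 Hz (proj1_sig F X)))) _).
  intros; apply (zero_from_unique Hz).
Defined.

Lemma Z0_zero (C D : StarCat) (z : D) (Hz : is_zero_object z) :
  is_zero_object (Z0 C z : FunStarCat C D).
Proof.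
  split; intro F.
  - exists (to_z Hz F). split; auto. intros t _. apply nt_eq; intro X.
    apply (zero_to_unique Hz).
  - exists (from_z Hz F). split; auto. intros t _. apply nt_eq; intro X.
    apply (zero_from_unique Hz).
Qed.

Lemma fc_zero_of_pointwise (C D : StarCat) (z : D) (Hz : is_zero_object z)
  (F G : FunStarCat C D) (t : hom F G) :
  (forall X, is_zero_mor (t X)) -> is_zero_mor t.
Proof.
  intros H. exists (Z0 C z), (to_z Hz F), (from_z Hz G). split.
  - apply Z0_zero; exact Hz.
  - apply nt_eq; intro X. apply zero_unique; [apply H|].
    simpl. apply zero_through; exact Hz.
Qed.

Lemma fc_pointwise_of_zero (C D : StarCat) (z : D) (Hz : is_zero_object z)
  (F G : FunStarCat C D) (t : hom F G) :
  is_zero_mor t -> forall X, is_zero_mor (t X).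
Proof.
  intros [Z [g [h [HZ E]]]] X.
  pose proof (Z0_zero C Hz) as H0.
  destruct (proj1 H0 Z) as [a _]. destruct (proj2 H0 Z) as [b _].
  assert (Eba : comp b a = idm Z) by (apply (zero_to_unique HZ)).
  exists z, (comp (a X) (g X)), (comp (h X) (b X)). split; [exact Hz|].
  rewrite E. simpl.
  rewrite <- comp_assoc. rewrite (comp_assoc _ (a X)).
  change (comp (b X) (a X)) with ((comp b a : hom Z Z) X).
  rewrite Eba. simpl. rewrite comp_id_l. reflexivity.
Qed.
Record KerData (S : StarCat) (X Y : S) (f : hom X Y) := {
  kob : S; kmor : hom kob X; kprop : is_kernel f kmor /\ is_isometry kmor }.

Lemma fc_kernel (C D : StarCat) (z : D) (Hz : is_zero_object z)
  (HD3 : forall (X Y : D) (f : hom X Y),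
      exists (K : D) (k : hom K X), is_kernel f k /\ is_isometry k)
  (F G : FunStarCat C D) (th : hom F G) :
  exists (K : FunStarCat C D) (k : hom K F), is_kernel th k /\ is_isometry k /\
    forall X, is_kernel (th X) (k X).
Proof.
  destruct F as [F HF], G as [G HG]. simpl in th.
  assert (Ex : forall X, exists kd : KerData (th X), True).
  { intro X. destruct (HD3 _ _ (th X)) as [K [k Hk]].
    exists (Build_KerData Hk); auto. }
  set (kd := fun X => choose (Ex X)).
  set (kk := fun X => kmor (kd X)).
  assert (Hkk : forall X, is_kernel (th X) (kk X)) by (intro; apply (kprop (kd X))).
  assert (Ikk : forall X, is_isometry (kk X)) by (intro; apply (kprop (kd X))).
  assert (Fac : forall X Y (f : hom X Y),
    comp (kk Y) (comp (star (kk Y)) (comp (fmap F f) (kk X))) = comp (fmap F f) (kk X)).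
  { intros X Y f. apply retract; [apply Ikk|].
    destruct (proj2 (Hkk Y) _ (comp (fmap F f) (kk X))) as [w [Hw _]].
    - rewrite comp_assoc, <- (naturality th), <- comp_assoc.
      apply zero_comp_l. apply (proj1 (Hkk X)).
    - eauto. }
  unshelve refine (let Kf : Functor C D := {| fob := fun X => kob (kd X);
     fmap := fun X Y f => comp (star (kk Y)) (comp (fmap F f) (kk X)) |} in _).
  - intro X. simpl. rewrite fmap_id, comp_id_l. apply Ikk.
  - intros X Y Z f g. simpl.
    rewrite <- !comp_assoc, Fac, fmap_comp.
    rewrite !comp_assoc. reflexivity.
  - assert (KS : is_star_functor Kf).
    { intros X Y f. simpl. rewrite HF, !star_comp, star_invol, comp_assoc. reflexivity. }
    set (K := exist _ Kf KS : FunStarCat C D).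
    unshelve refine (let kn : hom K (exist _ F HF : FunStarCat C D) :=
       @Build_NatTrans _ _ Kf F kk _ in _).
    { intros X Y f. simpl. symmetry; apply Fac. }
    assert (Iso : is_isometry kn) by (apply nt_eq; intro X; apply Ikk).
    exists K, kn. split; [|split; [exact Iso | exact Hkk]].
    split.
    + apply (fc_zero_of_pointwise Hz). intro X. apply (proj1 (Hkk X)).
    + intros W g Hg. exists (comp (star kn) g). split.
      * apply nt_eq; intro X. simpl. apply retract; [apply Ikk|].
        destruct (proj2 (Hkk X) _ (g X)) as [w [Hw _]].
        -- apply (fc_pointwise_of_zero Hz Hg X).
        -- eauto.
      * intros v Hv. rewrite <- Hv, comp_assoc. unfold is_isometry in Iso.
        refine (eq_trans (f_equal (fun x => comp x v) Iso) _); apply comp_id_l.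
Qed.
Record BPData (S : StarCat) (A B : S) := {
  bob : S; bs1 : hom A bob; br1 : hom bob A; bs2 : hom B bob; br2 : hom bob B;
  bprop : is_orthonormal_biproduct bs1 br1 bs2 br2 }.

Lemma fc_biprod (C D : StarCat) (z : D) (Hz : is_zero_object z)
  (HD2 : forall X1 X2 : D, exists (X : D) (s1 : hom X1 X) (r1 : hom X X1)
                            (s2 : hom X2 X) (r2 : hom X X2),
      is_orthonormal_biproduct s1 r1 s2 r2)
  (F1 F2 : FunStarCat C D) :
  exists (P : FunStarCat C D) (r1 : hom P F1) (r2 : hom P F2),
    is_orthonormal_biproduct (star r1) r1 (star r2) r2 /\
    forall X, is_product (r1 X) (r2 X).
Proof.
  destruct F1 as [F1 HF1], F2 as [F2 HF2].
  assert (Ex : forall X, exists bd : BPData (F1 X) (F2 X), True).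
  { intro X. destruct (HD2 (F1 X) (F2 X)) as [P [s1 [r1 [s2 [r2 H]]]]].
    exists (Build_BPData H); auto. }
  set (bd := fun X => choose (Ex X)).
  assert (Hp : forall X, is_product (br1 (bd X)) (br2 (bd X)))
    by (intro X; apply (bprop (bd X))).
  assert (Hb : forall X, is_biproduct (bs1 (bd X)) (br1 (bd X)) (bs2 (bd X)) (br2 (bd X)))
    by (intro X; apply (bprop (bd X))).
  assert (Hs1 : forall X, br1 (bd X) = star (bs1 (bd X))) by (intro X; apply (bprop (bd X))).
  assert (Hs2 : forall X, br2 (bd X) = star (bs2 (bd X))) by (intro X; apply (bprop (bd X))).
  set (pm := fun X Y (f : hom X Y) =>
     choose (uex (Hp Y (bob (bd X)) (comp (fmap F1 f) (br1 (bd X)))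
                                     (comp (fmap F2 f) (br2 (bd X)))))).
  assert (Hpm : forall X Y (f : hom X Y),
     comp (br1 (bd Y)) (pm X Y f) = comp (fmap F1 f) (br1 (bd X)) /\
     comp (br2 (bd Y)) (pm X Y f) = comp (fmap F2 f) (br2 (bd X))).
  { intros X Y f. apply (choose_spec (uex (Hp Y (bob (bd X)) (comp (fmap F1 f) (br1 (bd X)))
                                     (comp (fmap F2 f) (br2 (bd X)))))). }
  clearbody pm.
  assert (Pm1 : forall X Y (f : hom X Y),
     comp (pm X Y f) (bs1 (bd X)) = comp (bs1 (bd Y)) (fmap F1 f)).
  { intros X Y f. destruct (Hb X) as (_ & _ & E1 & E2 & Z1 & Z2).
    destruct (Hb Y) as (_ & _ & E1' & E2' & Z1' & Z2').
    apply (prod_uniq (Hp Y)).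
    - rewrite !comp_assoc, E1', (proj1 (Hpm X Y f)), <- comp_assoc, E1, comp_id_l, comp_id_r.
      reflexivity.
    - apply zero_unique.
      + rewrite comp_assoc, (proj2 (Hpm X Y f)), <- comp_assoc. apply zero_comp_l; exact Z1.
      + rewrite comp_assoc. apply zero_comp_r; exact Z1'. }
  assert (Pm2 : forall X Y (f : hom X Y),
     comp (pm X Y f) (bs2 (bd X)) = comp (bs2 (bd Y)) (fmap F2 f)).
  { intros X Y f. destruct (Hb X) as (_ & _ & E1 & E2 & Z1 & Z2).
    destruct (Hb Y) as (_ & _ & E1' & E2' & Z1' & Z2').
    apply (prod_uniq (Hp Y)).
    - apply zero_unique.
      + rewrite comp_assoc, (proj1 (Hpm X Y f)), <- comp_assoc. apply zero_comp_l; exact Z2.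
      + rewrite comp_assoc. apply zero_comp_r; exact Z2'.
    - rewrite !comp_assoc, E2', (proj2 (Hpm X Y f)), <- comp_assoc, E2, comp_id_l, comp_id_r.
      reflexivity. }
  unshelve refine (let Pf : Functor C D := {| fob := fun X => bob (bd X); fmap := pm |} in _).
  - intro X. apply (prod_uniq (Hp X)).
    + rewrite (proj1 (Hpm X X (idm X))), fmap_id, comp_id_l, comp_id_r; reflexivity.
    + rewrite (proj2 (Hpm X X (idm X))), fmap_id, comp_id_l, comp_id_r; reflexivity.
  - intros X Y Z f g. apply (prod_uniq (Hp Z)).
    + rewrite (proj1 (Hpm _ _ _)), comp_assoc, (proj1 (Hpm _ _ _)), <- comp_assoc,
        (proj1 (Hpm _ _ _)), comp_assoc, fmap_comp; reflexivity.
    + rewrite (proj2 (Hpm _ _ _)), comp_assoc, (proj2 (Hpm _ _ _)), <- comp_assoc,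
        (proj2 (Hpm _ _ _)), comp_assoc, fmap_comp; reflexivity.
  - assert (PS : is_star_functor Pf).
    { intros X Y f. simpl. apply (prod_uniq (Hp X)).
      + rewrite (proj1 (Hpm _ _ _)), Hs1, Hs1, <- star_comp, Pm1, star_comp, HF1. reflexivity.
      + rewrite (proj2 (Hpm _ _ _)), Hs2, Hs2, <- star_comp, Pm2, star_comp, HF2. reflexivity. }
    set (P := exist _ Pf PS : FunStarCat C D).
    unshelve refine (let r1 : hom P (exist _ F1 HF1 : FunStarCat C D) :=
       @Build_NatTrans _ _ Pf F1 (fun X => br1 (bd X)) _ in _).
    { intros X Y f. simpl. symmetry; apply (proj1 (Hpm _ _ _)). }
    unshelve refine (let r2 : hom P (exist _ F2 HF2 : FunStarCat C D) :=
       @Build_NatTrans _ _ Pf F2 (fun X => br2 (bd X)) _ in _).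
    { intros X Y f. simpl. symmetry; apply (proj2 (Hpm _ _ _)). }
    assert (Prod : is_product r1 r2).
    { intros W g1 g2.
      set (u := fun X => choose (uex (Hp X _ (g1 X) (g2 X)))).
      assert (Hu : forall X, comp (br1 (bd X)) (u X) = g1 X /\ comp (br2 (bd X)) (u X) = g2 X).
      { intro X. apply (choose_spec (uex (Hp X _ (g1 X) (g2 X)))). }
      clearbody u.
      unshelve refine (let un : hom W P := @Build_NatTrans _ _ (proj1_sig W) Pf u _ in _).
      { intros X Y f. simpl. apply (prod_uniq (Hp Y)).
        - rewrite !comp_assoc, (proj1 (Hpm _ _ _)), <- comp_assoc, (proj1 (Hu X)), (proj1 (Hu Y)).
          apply (naturality g1).
        - rewrite !comp_assoc, (proj2 (Hpm _ _ _)), <- comp_assoc, (proj2 (Hu X)), (proj2 (Hu Y)).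
          apply (naturality g2). }
      exists un. split.
      - split; apply nt_eq; intro X; simpl; apply Hu.
      - intros v [V1 V2]. apply nt_eq; intro X. apply (prod_uniq (Hp X)).
        + simpl. rewrite (proj1 (Hu X)). rewrite <- V1. reflexivity.
        + simpl. rewrite (proj2 (Hu X)). rewrite <- V2. reflexivity. }
    exists P, r1, r2. split; [|exact Hp].
    split; [|split; symmetry; apply star_invol].
    split; [exact Prod|]. split; [apply prod_coprod; exact Prod|].
    split; [|split; [|split]].
    + apply nt_eq; intro X. simpl. destruct (Hb X) as (_&_&E1&E2&Z1&Z2).
      rewrite Hs1 in E1 |- *. rewrite star_invol. exact E1.
    + apply nt_eq; intro X. simpl. destruct (Hb X) as (_&_&E1&E2&Z1&Z2).
      rewrite Hs2 in E2 |- *. rewrite star_invol. exact E2.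
    + apply (fc_zero_of_pointwise Hz). intro X. simpl. destruct (Hb X) as (_&_&E1&E2&Z1&Z2).
      rewrite (Hs1 X), star_invol. exact Z1.
    + apply (fc_zero_of_pointwise Hz). intro X. simpl. destruct (Hb X) as (_&_&E1&E2&Z1&Z2).
      rewrite (Hs2 X), star_invol. exact Z2.
Qed.
Theorem proposition2p5 (C D : StarCat) :
  is_pre_hilbert D -> is_pre_hilbert (FunStarCat C D).
Proof.
  intros [[z Hz] [HD2 [HD3 HD4]]].
  split; [|split; [|split]].
  - exists (Z0 C z). apply Z0_zero; exact Hz.
  - intros F1 F2. destruct (fc_biprod Hz HD2 F1 F2) as [P [r1 [r2 [H _]]]].
    exists P, (star r1), r1, (star r2), r2. exact H.
  - intros X Y f. destruct (fc_kernel Hz HD3 f) as [K [k [H1 [H2 _]]]].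
    exists K, k. split; assumption.
  - intros F XX s1 r1 s2 r2 Hbi d H1 H2.
    destruct (fc_biprod Hz HD2 F F) as [P [p1 [p2 [HPb HPx]]]].
    destruct Hbi as [[HX [Hcop [E1 [E2 [Z1 Z2]]]]] [Er1 Er2]].
    destruct (proj1 (proj1 HPb) XX r1 r2) as [phi [[Ph1 Ph2] _]].
    destruct (HX P p1 p2) as [psi [[Ps1 Ps2] _]].
    assert (Epp : comp psi phi = idm XX).
    { apply (prod_uniq HX).
      - rewrite comp_assoc, Ps1, Ph1, comp_id_r; reflexivity.
      - rewrite comp_assoc, Ps2, Ph2, comp_id_r; reflexivity. }
    assert (cX : forall (A B : FunStarCat C D) (t u : hom A B) X, t = u ->
               @component C D _ _ t X = @component C D _ _ u X)
      by (intros; subst; reflexivity).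
    assert (Hnm : forall X, is_normal_mono (d X)).
    { intro X. apply (HD4 _ _ (s1 X) (r1 X) (s2 X) (r2 X)).
      - assert (PX : is_product (r1 X) (r2 X)).
        { apply (prod_transfer (HPx X) (phi := phi X) (psi := psi X)).
          - exact (cX _ _ _ _ X Ph1).
          - exact (cX _ _ _ _ X Ph2).
          - exact (cX _ _ _ _ X Ps1).
          - exact (cX _ _ _ _ X Ps2).
          - exact (cX _ _ _ _ X Epp). }
        assert (Q1 : r1 X = star (s1 X)) by exact (cX _ _ _ _ X Er1).
        assert (Q2 : r2 X = star (s2 X)) by exact (cX _ _ _ _ X Er2).
        split; [|split; assumption].
        split; [exact PX|]. split.
        + rewrite <- (star_invol (s1 X)), <- (star_invol (s2 X)), <- Q1, <- Q2.
          apply prod_coprod; exact PX.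
        + split; [exact (cX _ _ _ _ X E1)|]. split; [exact (cX _ _ _ _ X E2)|].
          split; [exact (fc_pointwise_of_zero Hz Z1 X) | exact (fc_pointwise_of_zero Hz Z2 X)].
      - exact (cX _ _ _ _ X H1).
      - exact (cX _ _ _ _ X H2). }
    destruct (fc_kernel Hz HD3 (star d)) as [K [k [Hk [Ik Hkx]]]].
    exists K, (star k). split.
    + apply (fc_zero_of_pointwise Hz). intro X.
      pose proof (zero_star (proj1 (Hkx X))) as ZZ.
      simpl in ZZ |- *. rewrite star_comp, star_invol in ZZ. exact ZZ.
    + intros W g Hg. exists (comp r1 g). split.
      * apply nt_eq; intro X. simpl.
        destruct (nm_factor (Hnm X) (Hkx X) (fc_pointwise_of_zero Hz Hg X)) as [u Hu].
        rewrite <- Hu. rewrite (comp_assoc u (d X) (r1 X)).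
        change (comp (r1 X) (d X)) with ((comp r1 d : hom F F) X).
        rewrite H1. simpl. rewrite comp_id_l. reflexivity.
      * intros v Hv. rewrite <- Hv, comp_assoc.
        refine (eq_trans (f_equal (fun x => comp x v) H1) _); apply comp_id_l.
Qed.
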